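(* Let $\mathcal{H}_O\simeq\mathbb{C}^{d_O}$ and $\mathcal{H}_R\simeq\mathbb{C}^{d_R}$. Let $H_R=\sum_{m=1}^{d_R}\lambda_m^{\uparrow}|\xi_m\rangle\langle\xi_m|$ with $\lambda_1^\uparrow\leqslant\dots\leqslant\lambda_{d_R}^\uparrow$ and $\{|\xi_m\rangle\}$ an orthonormal basis of $\mathcal{H}_R$; let $\beta\in(0,\infty)$ and $\rho_R(\beta)=e^{-\beta H_R}/\mathrm{tr}[e^{-\beta H_R}]=\sum_m r_m^{\downarrow}|\xi_m\rangle\langle\xi_m|$. Let $\rho_O=\sum_{l=1}^{d_O}o_l^{\downarrow}|\varphi_l\rangle\langle\varphi_l|$ be a density operator on $\mathcal{H}_O$ with $o_1^\downarrow\geqslant\dots\geqslant o_{d_O}^\downarrow$ and $\{|\varphi_l\rangle\}$ an orthonormal basis. Write $\rho=\rho_O\otimes\rho_R(\beta)=\sum_{n=1}^{d_Od_R}p_n^{\downarrow}|\psi_n\rangle\langle\psi_n|$, where $(p_n^\downarrow)_n$ is the non-increasing rearrangement of $(o_l^\downarrow r_m^\downarrow)_{l,m}$ and $(|\psi_n\rangle)_n$ the correspondingly rearranged family $(|\varphi_l\rangle\otimes|\xi_m\rangle)_{l,m}$. For a unitary $U$ on $\mathcal{H}_O\otimes\mathcal{H}_R$ let $\rho_O'=\mathrm{tr}_R[U\rho U^\dagger]$ and $p(\varphi_1|\rho_O')=\langle\varphi_1|\rho_O'|\varphi_1\rangle$. Then $$\max_{U}\, p(\varphi_1|\rho_O')=p_{\varphi_1}^{\max}:=\sum_{m=1}^{d_R}p_m^{\downarrow},$$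 and this maximum is attained by every unitary $U$ for which there is an orthonormal basis $\{|\xi_m'\rangle\}_{m=1}^{d_R}$ of $\mathcal{H}_R$ with $U|\psi_m\rangle=|\varphi_1\rangle\otimes|\xi_m'\rangle$ for all $m\in\{1,\dots,d_R\}$.
   Context: The maximum is over all unitary operators on $\mathcal{H}_O\otimes\mathcal{H}_R$; $\mathrm{tr}_R$ denotes the partial trace over $\mathcal{H}_R$. *)

(* Defs.v *)
From HB Require Import structures.
From mathcomp Require Import all_boot all_order all_algebra.
From mathcomp.real_closed Require Import complex mxtens.
From mathcomp Require Import reals.
From mathcomp Require Import sequences exp.
Set Implicit Arguments. Unset Strict Implicit. Unset Printing Implicit Defensive.
Import Order.TTheory GRing.Theory Num.Theory.
Local Open Scope ring_scope.

Definition mxadj (R : rcfType) m n (A : 'M[R[i]]_(m, n)) : 'M[R[i]]_(n, m) :=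
  (map_mx (@conjc R) A)^T.

Definition unitary (R : rcfType) n (U : 'M[R[i]]_n) : Prop :=
  mxadj U *m U = 1%:M /\ U *m mxadj U = 1%:M.

Definition onb (R : rcfType) d (v : 'I_d -> 'cV[R[i]]_d) : Prop :=
  forall j k, mxadj (v j) *m v k = ((j == k)%:R)%:M.

Definition proj (R : rcfType) n (v : 'cV[R[i]]_n) : 'M[R[i]]_n := v *m mxadj v.

(* partial trace over the second factor H_R of H_O (x) H_R = C^(dO*dR),
   consistent with the index convention of the Kronecker product *t *)
Definition ptraceR (R : rcfType) dO dR (A : 'M[R[i]]_(dO * dR)) : 'M[R[i]]_dO :=
  \matrix_(j, k) \sum_(m < dR) A (mxtens_index (j, m)) (mxtens_index (k, m)).

Definition gibbs_weight (R : realType) dR (lam : 'I_dR -> R) (beta : R) (m : 'I_dR) : R :=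
  expR (- beta * lam m) / \sum_(k < dR) expR (- beta * lam k).

Definition hamR (R : realType) dR (lam : 'I_dR -> R) (xi : 'I_dR -> 'cV[R[i]]_dR)
  : 'M[R[i]]_dR := \sum_(m < dR) real_complex R (lam m) *: proj (xi m).

(* rho_R(beta) = e^{-beta H_R}/tr e^{-beta H_R}, written in the eigenbasis of H_R *)
Definition thermal (R : realType) dR (lam : 'I_dR -> R) (xi : 'I_dR -> 'cV[R[i]]_dR)
  (beta : R) : 'M[R[i]]_dR :=
  \sum_(m < dR) real_complex R (gibbs_weight lam beta m) *: proj (xi m).

Definition stateO (R : realType) dO (o : 'I_dO -> R) (phi : 'I_dO -> 'cV[R[i]]_dO)
  : 'M[R[i]]_dO := \sum_(l < dO) real_complex R (o l) *: proj (phi l).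

(* Main.v *)
Require Import Defs.
From HB Require Import structures.
From mathcomp Require Import all_boot all_order all_algebra.
From mathcomp.real_closed Require Import complex mxtens.
From mathcomp Require Import reals.
From mathcomp Require Import sequences exp.
Import Order.TTheory GRing.Theory Num.Theory.
From mathcomp Require Import ring.
Set Implicit Arguments. Unset Strict Implicit. Unset Printing Implicit Defensive.
Local Open Scope ring_scope.

Section Helpers.
Variable R : rcfType.
Local Notation C := (R[i]).

Lemma adjE m n (A : 'M[C]_(m, n)) i j : mxadj A i j = conjc (A j i).
Proof. by rewrite /mxadj !mxE. Qed.

Lemma adjM m n p (A : 'M[C]_(m, n)) (B : 'M[C]_(n, p)) :
  mxadj (A *m B) = mxadj B *m mxadj A.
Proof. by rewrite /mxadj map_mxM trmx_mul. Qed.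

Lemma adjK m n (A : 'M[C]_(m, n)) : mxadj (mxadj A) = A.
Proof. by apply/matrixP=> i j; rewrite !adjE conjcK. Qed.

Lemma adjT m n p q (A : 'M[C]_(m, n)) (B : 'M[C]_(p, q)) :
  mxadj (A *t B) = mxadj A *t mxadj B.
Proof. by rewrite /mxadj map_mxT trmx_tens. Qed.

Lemma adj1 n : mxadj (1%:M : 'M[C]_n) = 1%:M.
Proof. by apply/matrixP=> i j; rewrite adjE !mxE eq_sym; case: (_ == _); rewrite ?conjc0 ?conjc1. Qed.

Lemma sumtens m n (F : 'I_(m * n) -> C) :
  \sum_(k < m * n) F k = \sum_(i < m) \sum_(j < n) F (mxtens_index (i, j)).
Proof.
rewrite [RHS]pair_big /= (reindex (@mxtens_index m n)) //=.
  by apply: eq_bigr => -[i j].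
apply: onW_bij; exists (@mxtens_unindex m n); [exact: mxtens_indexK | exact: mxtens_unindexK].
Qed.

Lemma tensvE m n (x : 'cV[C]_m) (y : 'cV[C]_n) i j :
  (x *t y) (mxtens_index (i, j)) 0 = x i 0 * y j 0.
Proof.
rewrite mxE mxtens_indexK /=.
by congr (x _ _ * y _ _); apply: val_inj; rewrite /= ?div0n ?mod0n.
Qed.

Lemma scal11 (M : 'M[C]_1) : M = (M 0 0)%:M.
Proof. by apply/matrixP=> i j; rewrite !ord1 mxE eqxx mulr1n. Qed.

Lemma inner_tens m n (a a' : 'cV[C]_m) (b b' : 'cV[C]_n) :
  (mxadj (a *t b) *m (a' *t b')) 0 0 = (mxadj a *m a') 0 0 * (mxadj b *m b') 0 0.
Proof.
rewrite adjT tensmx_mul mxE.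
have e1 : (mxtens_unindex (m:=1) (n:=1) 0).1 = 0 by apply/val_inj.
have e2 : (mxtens_unindex (m:=1) (n:=1) 0).2 = 0 by apply/val_inj.
by rewrite e1 e2.
Qed.

Lemma delta_inner n (k : 'I_n) (v : 'cV[C]_n) :
  (mxadj (delta_mx k 0 : 'cV[C]_n) *m v) 0 0 = v k 0.
Proof.
rewrite mxE (bigD1 k) //= big1 ?addr0.
  by rewrite adjE mxE !eqxx conjc1 mul1r.
by move=> i /negbTE ne; rewrite adjE mxE ne conjc0 mul0r.
Qed.

Definition nrm n (x : 'cV[C]_n) := (mxadj x *m x) 0 0.

Lemma nrmE n (x : 'cV[C]_n) : nrm x = \sum_i x i 0 * conjc (x i 0).
Proof. by rewrite /nrm mxE; apply: eq_bigr=> i _; rewrite adjE mulrC. Qed.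

Lemma nrm_ge0 n (x : 'cV[C]_n) : 0 <= nrm x.
Proof. by rewrite nrmE sumr_ge0 // => i _; apply: mulcJ_ge0. Qed.

Definition colmx n k (f : 'I_k -> 'cV[C]_n) : 'M[C]_(n, k) := \matrix_(i, c) f c i 0.

Lemma colmx_unitary n (f : 'I_n -> 'cV[C]_n) : onb f ->
  mxadj (colmx f) *m colmx f = 1%:M /\ colmx f *m mxadj (colmx f) = 1%:M.
Proof.
move=> hf; suff h : mxadj (colmx f) *m colmx f = 1%:M by split=> //; apply: mulmx1C.
apply/matrixP=> c c'; move: (hf c c') => /matrixP /(_ 0 0).
rewrite !mxE eqxx mulr1n => <-; apply: eq_bigr=> i _.
by rewrite !adjE !mxE.
Qed.

Lemma colmx_col n k (f : 'I_k -> 'cV[C]_n) c : colmx f *m delta_mx c 0 = f c.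
Proof. by rewrite -colE; apply/matrixP=> i j; rewrite !mxE ord1. Qed.

Lemma colmx_adj n k (f : 'I_k -> 'cV[C]_n) (x : 'cV[C]_n) c :
  (mxadj (colmx f) *m x) c 0 = (mxadj (f c) *m x) 0 0.
Proof. by rewrite !mxE; apply: eq_bigr=> i _; rewrite !adjE !mxE. Qed.

Lemma parseval n (f : 'I_n -> 'cV[C]_n) (x : 'cV[C]_n) : onb f ->
  \sum_c (mxadj (f c) *m x) 0 0 * conjc ((mxadj (f c) *m x) 0 0) = nrm x.
Proof.
move=> /colmx_unitary [_ h2].
have -> : nrm x = nrm (mxadj (colmx f) *m x).
  by rewrite /nrm adjM adjK mulmxA -(mulmxA (mxadj x)) h2 mulmx1.
by rewrite nrmE; apply: eq_bigr=> c _; rewrite colmx_adj.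
Qed.


Lemma sum_e m n (v : 'cV[C]_m) (k : 'I_n) (F : 'I_(m * n) -> C) :
  \sum_c F c * (v *t (delta_mx k 0 : 'cV[C]_n)) c 0
  = \sum_j F (mxtens_index (j, k)) * v j 0.
Proof.
rewrite sumtens; apply: eq_bigr=> j _.
rewrite (bigD1 k) //= big1 ?addr0; first by rewrite tensvE mxE !eqxx mulr1.
by move=> k' /negbTE ne; rewrite tensvE mxE ne mulr0 mulr0.
Qed.

Lemma sum_e' m n (v : 'cV[C]_m) (k : 'I_n) (F : 'I_(m * n) -> C) :
  \sum_c conjc ((v *t (delta_mx k 0 : 'cV[C]_n)) c 0) * F c
  = \sum_j conjc (v j 0) * F (mxtens_index (j, k)).
Proof.
rewrite sumtens; apply: eq_bigr=> j _.
rewrite (bigD1 k) //= big1 ?addr0; first by rewrite tensvE mxE !eqxx mulr1.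
by move=> k' /negbTE ne; rewrite tensvE mxE ne mulr0 conjc0 mul0r.
Qed.

Lemma projE n (v : 'cV[C]_n) i j : proj v i j = v i 0 * conjc (v j 0).
Proof. by rewrite /proj mxE big_ord1 adjE. Qed.

Lemma adj11 p q (M : 'M[C]_(p, q)) i j : conjc (mxadj M j i) = M i j.
Proof. by rewrite adjE conjcK. Qed.

Section Core.
Variables (dO dR : nat) (phi : 'I_dO -> 'cV[C]_dO) (l0 : 'I_dO).
Hypothesis hphi : onb phi.
Local Notation phi1 := (phi l0).
Local Notation N := (dO * dR)%N.

Definition ek (k : 'I_dR) : 'cV[C]_N := phi1 *t (delta_mx k 0 : 'cV[C]_dR).
Definition Ak k (x : 'cV[C]_N) := (mxadj (ek k) *m x) 0 0.
Definition qq (x : 'cV[C]_N) := \sum_k Ak k x * conjc (Ak k x).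

Lemma qq_ge0 x : 0 <= qq x.
Proof. by rewrite sumr_ge0 // => k _; apply: mulcJ_ge0. Qed.

Lemma delta_onb n : onb (fun k : 'I_n => (delta_mx k 0 : 'cV[C]_n)).
Proof.
move=> k k'; rewrite [LHS]scal11 delta_inner mxE eqxx andbT eq_sym.
by [].
Qed.

Definition gg (c : 'I_N) : 'cV[C]_N :=
  phi (mxtens_unindex c).1 *t (delta_mx (mxtens_unindex c).2 0 : 'cV[C]_dR).

Lemma gg_onb : onb gg.
Proof.
move=> c c'; rewrite [LHS]scal11 inner_tens.
have h1 := hphi (mxtens_unindex c).1 (mxtens_unindex c').1.
have h2 := delta_onb (mxtens_unindex c).2 (mxtens_unindex c').2.
move/matrixP: h1 => /(_ 0 0) ->; move/matrixP: h2 => /(_ 0 0) ->.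
rewrite !mxE eqxx !mulr1n -natrM mulnb.
case: (mxtens_indexP c) => l k; case: (mxtens_indexP c') => l' k'.
by rewrite !mxtens_indexK /= (inj_eq (can_inj (@mxtens_indexK _ _))) xpair_eqE.
Qed.

Lemma qq_le1 x : nrm x = 1 -> qq x <= 1.
Proof.
move=> hx; rewrite -hx -(parseval x gg_onb) sumtens (bigD1 l0) //=.
have -> : \sum_(k < dR) (mxadj (gg (mxtens_index (l0, k))) *m x) 0 0 *
     conjc ((mxadj (gg (mxtens_index (l0, k))) *m x) 0 0) = qq x.
  by apply: eq_bigr=> k _; rewrite /gg mxtens_indexK.
rewrite lerDl sumr_ge0 // => l _; rewrite sumr_ge0 // => k _.
exact: mulcJ_ge0.
Qed.

Lemma ek_nrm k : nrm (ek k) = 1.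
Proof.
rewrite /nrm /ek inner_tens; move/matrixP: (hphi l0 l0) => /(_ 0 0) ->.
by move/matrixP: (delta_onb k k) => /(_ 0 0) ->; rewrite !mxE !eqxx mulr1.
Qed.

Lemma qq_sum (U : 'M[C]_N) (psi : 'I_N -> 'cV[C]_N) :
  unitary U -> onb psi -> \sum_n qq (U *m psi n) = dR%:R.
Proof.
move=> [hU1 hU2] hpsi; rewrite /qq exchange_big /=.
rewrite -[dR in RHS]card_ord -sumr_const; apply: eq_bigr => k _.
have E n : Ak k (U *m psi n) = conjc ((mxadj (psi n) *m (mxadj U *m ek k)) 0 0).
  by rewrite /Ak -adj11 !adjM adjK mulmxA.
under eq_bigr do rewrite E conjcK mulrC.
rewrite parseval // /nrm adjM adjK mulmxA -(mulmxA (mxadj (ek k))) hU2 mulmx1.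
exact: ek_nrm.
Qed.

Lemma prob_ek (M : 'M[C]_N) :
  (mxadj phi1 *m ptraceR M *m phi1) 0 0 = \sum_k (mxadj (ek k) *m M *m ek k) 0 0.
Proof.
transitivity (\sum_k \sum_j \sum_j' conjc (phi1 j' 0) * M (mxtens_index (j', k)) (mxtens_index (j, k)) * phi1 j 0).
  rewrite mxE exchange_big /=; apply: eq_bigr => j _.
  rewrite mxE big_distrl /= exchange_big /=; apply: eq_bigr => k _.
  by rewrite adjE mxE big_distrr big_distrl /=.
apply: eq_bigr => k _; rewrite [RHS]mxE /ek sum_e; apply: eq_bigr => j _.
rewrite mxE.
under [in RHS]eq_bigr do rewrite adjE.
rewrite sum_e' big_distrl /=.
by [].
Qed.


Lemma prob_sum (U : 'M[C]_N) (psi : 'I_N -> 'cV[C]_N) (P : 'I_N -> C) :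
  (mxadj phi1 *m ptraceR (U *m (\sum_n P n *: (psi n *m mxadj (psi n))) *m mxadj U) *m phi1) 0 0
  = \sum_n P n * qq (U *m psi n).
Proof.
rewrite prob_ek mulmx_sumr mulmx_suml.
under eq_bigr do rewrite mulmx_sumr mulmx_suml summxE.
rewrite exchange_big /=; apply: eq_bigr => n _.
rewrite /qq big_distrr /=; apply: eq_bigr => k _.
rewrite -scalemxAr -scalemxAl -scalemxAr -scalemxAl mxE; congr (_ * _).
have -> : U *m (psi n *m mxadj (psi n)) *m mxadj U = (U *m psi n) *m mxadj (U *m psi n) by rewrite adjM !mulmxA.
rewrite !mulmxA -(mulmxA _ (mxadj (U *m psi n))) -(mulmxA (mxadj (ek k))).
rewrite mxE big_ord1 /Ak; congr (_ * _).
have h : mxadj (ek k) *m (U *m psi n) = mxadj (mxadj (U *m psi n) *m ek k) by rewrite adjM adjK.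
by rewrite h adj11.
Qed.


Lemma qq_tens (v : 'cV[C]_dR) : qq (phi1 *t v) = nrm v.
Proof.
rewrite /qq nrmE; apply: eq_bigr => k _.
rewrite /Ak /ek inner_tens; move/matrixP: (hphi l0 l0) => /(_ 0 0) ->.
by rewrite delta_inner mxE eqxx mul1r.
Qed.

Lemma nrm_unit (U : 'M[C]_N) (x : 'cV[C]_N) : unitary U -> nrm (U *m x) = nrm x.
Proof. by case=> h1 _; rewrite /nrm adjM mulmxA -(mulmxA _ _ U) h1 mulmx1. Qed.

Lemma exists_U (psi : 'I_N -> 'cV[C]_N) : onb psi ->
  exists U, unitary U /\ forall n, U *m psi n = gg n.
Proof.
move=> hpsi; have [G1 G2] := colmx_unitary gg_onb.
have [P1 P2] := colmx_unitary hpsi.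
exists (colmx gg *m mxadj (colmx psi)); split; first split.
- rewrite adjM adjK !mulmxA -(mulmxA _ (mxadj (colmx gg))) G1 mulmx1 P2 //.
- rewrite adjM adjK !mulmxA -(mulmxA _ (mxadj (colmx psi))) P1 mulmx1 G2 //.
move=> n; rewrite -(colmx_col psi) !mulmxA -(mulmxA _ (mxadj (colmx psi))) P1 mulmx1.
exact: colmx_col.
Qed.

End Core.

Lemma natsum_ord N k : (k <= N)%N ->
  \sum_(n < N) ((n < k)%N%:R : C) = k%:R.
Proof.
move=> hk; rewrite (eq_bigr (fun n : 'I_N => if (n < k)%N then (1 : C) else 0)); last by move=> n _; case: ifP.
rewrite -big_mkcond /=.
rewrite -(big_ord_widen N (fun _ => (1 : C))) // sumr_const card_ord.
by [].
Qed.

Lemma key_ineq N k (P q : 'I_N -> C) (t : C) :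
  (forall n, 0 <= q n) -> (forall n, q n <= 1) -> \sum_n q n = k%:R -> (k <= N)%N ->
  (forall n : 'I_N, (n < k)%N -> t <= P n) -> (forall n : 'I_N, (k <= n)%N -> P n <= t) ->
  \sum_n P n * q n <= \sum_(n < N | (n < k)%N) P n.
Proof.
move=> q0 q1 qs hk Pt tP.
have H1 : \sum_n P n * q n <= \sum_(n : 'I_N) (((n < k)%N%:R : C) * P n + t * (q n - ((n < k)%N%:R : C))).
  apply: ler_sum => n _; case: ltnP => hn.
    rewrite -subr_ge0.
    have -> : 1%:R * P n + t * (q n - 1%:R) - P n * q n = (P n - t) * (1 - q n) by ring.
    by apply: mulr_ge0; rewrite subr_ge0 ?Pt ?q1.
  rewrite -subr_ge0.
  have -> : 0%:R * P n + t * (q n - 0%:R) - P n * q n = (t - P n) * q n by ring.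
  by apply: mulr_ge0; rewrite ?subr_ge0 ?tP ?q0.
apply: (le_trans H1).
rewrite big_split /= -big_distrr /= sumrB qs natsum_ord // subrr mulr0 addr0.
rewrite [X in _ <= X]big_mkcond /=; apply: ler_sum => n _.
by case: ifP; rewrite ?mul1r ?mul0r.
Qed.

Lemma key_eq N k (P q : 'I_N -> C) :
  (forall n, 0 <= q n) -> \sum_n q n = k%:R -> (k <= N)%N ->
  (forall n : 'I_N, (n < k)%N -> q n = 1) ->
  \sum_n P n * q n = \sum_(n < N | (n < k)%N) P n.
Proof.
move=> q0 qs hk q1.
have hz : \sum_(n < N | ~~ (n < k)%N) q n = 0.
  move: qs; rewrite (bigID (fun n : 'I_N => (n < k)%N)) /=.
  rewrite (eq_bigr (fun _ => 1)); last by move=> n /q1.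
  rewrite big_mkcond /= -(natsum_ord hk).
  have -> : \sum_(i < N) (if (i < k)%N then (1 : C) else 0) = \sum_(n < N) ((n < k)%N%:R : C).
    by apply: eq_bigr => n _; case: ifP.
  by move=> e; apply: (addrI (\sum_(n < N) ((n < k)%N%:R : C))); rewrite addr0.
have := hz; move/psumr_eq0P => /(_ (fun n _ => q0 n)) hq.
rewrite (bigID (fun n : 'I_N => (n < k)%N)) /= [X in _ + X]big1 ?addr0.
  by apply: eq_bigr => n /q1 ->; rewrite mulr1.
by move=> n /hq ->; rewrite mulr0.
Qed.

End Helpers.

Theorem lemma1 (R : realType) (dO dR : nat) (hO : (0 < dO)%N) (hR : (0 < dR)%N)
  (lam : 'I_dR -> R) (xi : 'I_dR -> 'cV[R[i]]_dR) (beta : R)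
  (o : 'I_dO -> R) (phi : 'I_dO -> 'cV[R[i]]_dO)
  (sigma : 'I_(dO * dR) -> 'I_dO * 'I_dR) :
  (forall m m' : 'I_dR, (m <= m')%N -> lam m <= lam m') ->
  onb xi ->
  0 < beta ->
  (forall l, 0 <= o l) -> \sum_(l < dO) o l = 1 ->
  (forall l l' : 'I_dO, (l <= l')%N -> o l' <= o l) ->
  onb phi ->
  bijective sigma ->
  let p := fun n : 'I_(dO * dR) =>
    o (sigma n).1 * gibbs_weight lam beta (sigma n).2 in
  let psi := fun n : 'I_(dO * dR) => phi (sigma n).1 *t xi (sigma n).2 in
  (forall n n' : 'I_(dO * dR), (n <= n')%N -> p n' <= p n) ->
  let phi1 := phi (Ordinal hO) in
  let rho := stateO o phi *t thermal lam xi beta in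
  let prob := fun U : 'M[R[i]]_(dO * dR) =>
    (mxadj phi1 *m ptraceR (U *m rho *m mxadj U) *m phi1) 0 0 in
  let pmax := real_complex R (\sum_(n < dO * dR | (n < dR)%N) p n) in
  (forall U, unitary U -> prob U <= pmax) /\
  (exists U, unitary U /\ prob U = pmax) /\
  (forall U, unitary U ->
     (exists xi' : 'I_dR -> 'cV[R[i]]_dR, onb xi' /\
        forall (n : 'I_(dO * dR)) (m : 'I_dR), (n : nat) = m ->
          U *m psi n = phi1 *t xi' m) ->
     prob U = pmax).
Proof.

Proof.
move=> hlam hxi hbeta ho0 hosum homono hphi hsig p psi hp phi1 rho prob pmax.
have hk : (dR <= dO * dR)%N by rewrite leq_pmull.
have hpsi : onb psi.
  move=> n n'; rewrite [LHS]scal11 /psi inner_tens.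
  move/matrixP: (hphi (sigma n).1 (sigma n').1) => /(_ 0 0) ->.
  move/matrixP: (hxi (sigma n).2 (sigma n').2) => /(_ 0 0) ->.
  rewrite !mxE eqxx !mulr1n -natrM mulnb -xpair_eqE -!surjective_pairing.
  by rewrite (inj_eq (bij_inj hsig)).
have hrho : rho = \sum_n (real_complex R (p n)) *: (psi n *m mxadj (psi n)).
  apply/matrixP => a b.
  case: (mxtens_indexP a) => i1 i2; case: (mxtens_indexP b) => j1 j2.
  rewrite /rho tensmxE !summxE.
  under eq_bigr do rewrite mxE projE.
  under [in RHS]eq_bigr do rewrite mxE projE /psi !tensvE.
  under [X in _ * X]eq_bigr do rewrite mxE projE.
  rewrite big_distrl /=.
  under eq_bigr do rewrite big_distrr /=.
  rewrite pair_big /= (reindex sigma) /=; last exact: onW_bij.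
  apply: eq_bigr => n _; rewrite /p rmorphM rmorphM /=.
  rewrite /gibbs_weight !rmorphM /=; ring.
have hprob U : prob U = \sum_n (real_complex R (p n)) * qq phi (Ordinal hO) (U *m psi n).
  by rewrite /prob hrho prob_sum.
have hpmax : pmax = \sum_(n < dO * dR | (n < dR)%N) (real_complex R (p n)) by rewrite /pmax rmorph_sum.
have part3 : forall U, unitary U ->
     (exists xi' : 'I_dR -> 'cV[R[i]]_dR, onb xi' /\
        forall (n : 'I_(dO * dR)) (m : 'I_dR), (n : nat) = m ->
          U *m psi n = phi1 *t xi' m) ->
     prob U = pmax.
  move=> U hU [xi' [hxi' hUx]]; rewrite hprob hpmax.
  apply: key_eq => //.
  - by move=> n; apply: qq_ge0.
  - exact: qq_sum.
  move=> n hn; rewrite (hUx n (Ordinal hn)) //= qq_tens //.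
  by rewrite /nrm (hxi' _ _) !mxE eqxx.
split; last split; last exact: part3.
  move=> U hU; rewrite hprob hpmax.
  have hd : (dR.-1 < dO * dR)%N by rewrite (leq_trans _ hk) // prednK.
  apply: (key_ineq (t := (real_complex R (p (Ordinal hd))))) => //.
  - by move=> n; apply: qq_ge0.
  - by move=> n; apply: qq_le1 => //; rewrite nrm_unit // /nrm hpsi !mxE eqxx.
  - exact: qq_sum.
  - by move=> n hn; rewrite lecR; apply: hp => /=; rewrite -ltnS prednK.
  - by move=> n hn; rewrite lecR; apply: hp => /=; rewrite (leq_trans _ hn) // leq_pred.
have [U [hU hUg]] := exists_U hphi hpsi.
exists U; split => //; apply: part3 => //.
exists (fun m => delta_mx m 0); split; first exact: delta_onb.
move=> n m hnm; rewrite hUg /gg.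
have e1 : (mxtens_unindex n).1 = Ordinal hO.
  by apply: val_inj; rewrite /= hnm divn_small.
have e2 : (mxtens_unindex n).2 = m.
  by apply: val_inj; rewrite /= hnm modn_small.
by rewrite e1 e2.
Qed.
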